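(* Let $\mathcal G$ be a synchronous game. The assignment $p^i_a\mapsto\frac12(1-z^i_a)$ extends to a unital $*$-isomorphism from the synchronous algebra $\mathcal A(\mathcal G)$ onto the SynchBCS algebra $\mathscr B(\mathcal G)$, whose inverse is determined by $z^i_a\mapsto 1-2p^i_a$.
   Context: A synchronous game has finite input set $I$ (for both players), output set $A$ (for both players) and predicate $V:A\times A\times I\times I\to\{0,1\}$ with $V(a,b|i,i)=0$ whenever $a\neq b$. The synchronous algebra $\mathcal A(\mathcal G)$ is the universal unital complex $*$-algebra with generators $p^i_a$, $(i,a)\in I\times A$, and relations $(p^i_a)^2=p^i_a=(p^i_a)^*$; $\sum_{a\in A}p^i_a=1$ for each $i$; $p^i_ap^j_b=0$ whenever $V(a,b|i,j)=0$. The SynchBCS algebra $\mathscr B(\mathcal G)$ is the universal unital complex $*$-algebra with generators $z^i_a$, $(i,a)\in I\times A$, and relations: $z^i_a=(z^i_a)^*$; $(z^i_a)^2=1$; $\frac12(1+z^i_a+z^j_b-z^i_az^j_b)=1$ whenever $V(a,b|i,j)=0$; $\prod_{a\in A}z^i_a=-1$ for each $i$ (product in a fixed order of $A$); $z^i_az^i_{a'}=z^i_{a'}z^i_a$ for all $a,a'\in A$. *)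

(* Defs.v *)
From HB Require Import structures.
From mathcomp Require Import all_boot all_order all_algebra all_field.
Set Implicit Arguments. Unset Strict Implicit. Unset Printing Implicit Defensive.
Import Order.TTheory GRing.Theory Num.Theory.
Local Open Scope ring_scope.

(* A unital complex *-algebra.  The underlying ring is a pzRingType, so the
   zero algebra (1 = 0) is allowed, as it must be for universal algebras. *)
Record starAlg := StarAlg {
  sa_car :> pzRingType;
  sa_scale : algC -> sa_car -> sa_car;
  sa_scale1 : forall x, sa_scale 1 x = x;
  sa_scaleA : forall a b x, sa_scale a (sa_scale b x) = sa_scale (a * b) x;
  sa_scaleDr : forall a x y, sa_scale a (x + y) = sa_scale a x + sa_scale a y;
  sa_scaleDl : forall a b x, sa_scale (a + b) x = sa_scale a x + sa_scale b x;
  sa_scaleAl : forall a x y, sa_scale a (x * y) = sa_scale a x * y;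
  sa_scaleAr : forall a x y, sa_scale a (x * y) = x * sa_scale a y;
  sa_star : sa_car -> sa_car;
  sa_starK : involutive sa_star;
  sa_starD : forall x y, sa_star (x + y) = sa_star x + sa_star y;
  sa_starM : forall x y, sa_star (x * y) = sa_star y * sa_star x;
  sa_starZ : forall a x, sa_star (sa_scale a x) = sa_scale (a^*)%C (sa_star x)
}.

Definition is_star_hom (S T : starAlg) (f : S -> T) : Prop :=
  [/\ forall x y, f (x + y) = f x + f y,
      forall a x, f (sa_scale a x) = sa_scale a (f x),
      forall x y, f (x * y) = f x * f y,
      f 1 = 1 &
      forall x, f (sa_star x) = sa_star (f x)].

Definition is_universal (I A : Type)
    (rel : forall B : starAlg, (I -> A -> B) -> Prop)
    (U : starAlg) (g : I -> A -> U) : Prop :=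
  rel U g /\
  forall (B : starAlg) (h : I -> A -> B), rel B h ->
    exists f : U -> B,
      [/\ is_star_hom f, (forall i a, f (g i a) = h i a) &
          forall f' : U -> B, is_star_hom f' -> (forall i a, f' (g i a) = h i a) ->
            forall x, f' x = f x].

(* synchronous game: predicate V a b i j = V(a,b|i,j) *)
Definition synchronous (I A : finType) (V : A -> A -> I -> I -> bool) : Prop :=
  forall i a b, a != b -> V a b i i = false.

Definition sync_rel (I A : finType) (V : A -> A -> I -> I -> bool)
    (B : starAlg) (p : I -> A -> B) : Prop :=
  [/\ forall i a, p i a * p i a = p i a,
      forall i a, sa_star (p i a) = p i a,
      forall i, \sum_(a : A) p i a = 1 &
      forall i j a b, V a b i j = false -> p i a * p j b = 0].

(* defining relations of the SynchBCS algebra B(G); the product over A is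
   taken in the fixed enumeration order of the finType A *)
Definition bcs_rel (I A : finType) (V : A -> A -> I -> I -> bool)
    (B : starAlg) (z : I -> A -> B) : Prop :=
  [/\ forall i a, sa_star (z i a) = z i a,
      forall i a, z i a * z i a = 1,
      forall i j a b, V a b i j = false ->
        sa_scale (2%:R^-1) (1 + z i a + z j b - z i a * z j b) = 1,
      forall i, \prod_(a : A) z i a = -1 &
      forall i a a', z i a * z i a' = z i a' * z i a].

(* Main.v *)
Require Import Defs.
From HB Require Import structures.
From mathcomp Require Import all_boot all_order all_algebra all_field.
Import Order.TTheory GRing.Theory Num.Theory.
Local Open Scope ring_scope.

Lemma conj_half : ((2%:R^-1 : algC)^*)%C = 2%:R^-1.
Proof. by rewrite fmorphV rmorph_nat. Qed.
Lemma half2C : (2%:R^-1 : algC) * 2%:R = 1.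
Proof. by rewrite mulVf // pnatr_eq0. Qed.
Lemma two_halfC : (2%:R : algC) * 2%:R^-1 = 1.
Proof. by rewrite mulfV // pnatr_eq0. Qed.

Lemma L1 (R : pzRingType) (x y : R) : (1 - x*+2)*(1 - y*+2) = 1 - x*+2 - y*+2 + (x*y)*+4.
Proof.
rewrite mulrBl mul1r mulrBr mulr1 mulrnAl mulrnAr -mulrnA opprB addrA addrAC.
by rewrite [1 - y*+2 - _]addrAC.
Qed.

Lemma prodL (R : pzRingType) (T : eqType) (F : T -> R) (r : seq T) :
  uniq r -> (forall x y, x != y -> F x * F y = 0) ->
  \prod_(a <- r) (1 - F a *+ 2) = 1 - (\sum_(a <- r) F a) *+ 2.
Proof.
move=> + orth; elim: r => [|x r IH] /=; first by rewrite !big_nil mul0rn subr0.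
move=> /andP[xr ur]; rewrite !big_cons IH // L1.
have -> : F x * \sum_(a <- r) F a = 0.
  rewrite mulr_sumr big1_seq // => a /= ar; apply: orth.
  by apply: contraNneq xr => ->.
by rewrite mul0rn addr0 [(F x + _) *+ 2]mulrnDl [- (F x *+ 2 + _)]opprD addrA.
Qed.

Section Add.
Lemma fB0 (M N : zmodType) (f : M -> N) : (forall x y, f (x + y) = f x + f y) -> f 0 = 0.
Proof. by move=> fD; apply: (addrI (f 0)); rewrite -fD !addr0. Qed.
Lemma fN (M N : zmodType) (f : M -> N) : (forall x y, f (x + y) = f x + f y) ->
  forall x, f (- x) = - f x.
Proof. by move=> fD x; apply: (addrI (f x)); rewrite -fD !subrr (fB0 _ _ _ fD). Qed.
Lemma fB (M N : zmodType) (f : M -> N) : (forall x y, f (x + y) = f x + f y) ->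
  forall x y, f (x - y) = f x - f y.
Proof. by move=> fD x y; rewrite fD (fN _ _ _ fD). Qed.
Lemma fMn (M N : zmodType) (f : M -> N) : (forall x y, f (x + y) = f x + f y) ->
  forall x n, f (x *+ n) = f x *+ n.
Proof. by move=> fD x; elim=> [|n IH]; rewrite ?mulr0n ?(fB0 _ _ _ fD) // !mulrS fD IH. Qed.
End Add.
Arguments fB0 {M N f}. Arguments fN {M N f}. Arguments fB {M N f}. Arguments fMn {M N f}.

Lemma scale0l (S : starAlg) (x : S) : sa_scale 0 x = 0.
Proof. by apply: (addrI (sa_scale 0 x)); rewrite -sa_scaleDl !addr0. Qed.
Lemma scale_nat (S : starAlg) n (x : S) : sa_scale n%:R x = x *+ n.
Proof. elim: n => [|n IH]; first by rewrite scale0l mulr0n.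
by rewrite -addn1 natrD sa_scaleDl IH sa_scale1 mulrnDr. Qed.
Lemma halfK (S : starAlg) (x : S) : sa_scale (2%:R^-1) (x *+ 2) = x.
Proof. by rewrite -scale_nat sa_scaleA half2C sa_scale1. Qed.
Lemma half2 (S : starAlg) (x : S) : (sa_scale (2%:R^-1) x) *+ 2 = x.
Proof. by rewrite -scale_nat sa_scaleA two_halfC sa_scale1. Qed.
Lemma two_inj (S : starAlg) (x y : S) : x *+ 2 = y *+ 2 -> x = y.
Proof. by move=> h; rewrite -(halfK _ x) -(halfK _ y) h. Qed.
Lemma scaleB (S : starAlg) a (x y : S) : sa_scale a (x - y) = sa_scale a x - sa_scale a y.
Proof. exact: (fB (sa_scaleDr a)). Qed.
Lemma starB (S : starAlg) (x y : S) : sa_star (x - y) = sa_star x - sa_star y.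
Proof. exact: (fB (@sa_starD S)). Qed.
Lemma starMn (S : starAlg) (x : S) n : sa_star (x *+ n) = sa_star x *+ n.
Proof. exact: (fMn (@sa_starD S)). Qed.
Lemma star1 (S : starAlg) : sa_star (1 : S) = 1.
Proof.
have h : sa_star (sa_star (1 : S)) = sa_star 1.
  by rewrite -{1}[sa_star 1]mul1r sa_starM sa_starK mul1r.
by rewrite -h sa_starK.
Qed.

Lemma homB (S T : starAlg) (f : S -> T) : is_star_hom f -> forall x y, f (x - y) = f x - f y.
Proof. by case=> fD *; apply: fB. Qed.
Lemma homMn (S T : starAlg) (f : S -> T) : is_star_hom f -> forall x n, f (x *+ n) = f x *+ n.
Proof. by case=> fD *; apply: fMn. Qed.

Lemma hom_id (S : starAlg) : is_star_hom (fun x : S => x).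
Proof. by []. Qed.
Lemma hom_comp (S T U : starAlg) (f : S -> T) (g : T -> U) :
  is_star_hom f -> is_star_hom g -> is_star_hom (fun x => g (f x)).
Proof.
case=> fD fZ fM f1 fS [gD gZ gM g1 gS]; split.
- by move=> x y; rewrite fD gD.
- by move=> a x; rewrite fZ gZ.
- by move=> x y; rewrite fM gM.
- by rewrite f1 g1.
- by move=> x; rewrite fS gS.
Qed.

Lemma L2 (R : pzRingType) (u v w : R) :
  1 + (1 - u) + (1 - v) - (1 - u - v + w) = 1 *+ 2 - w.
Proof.
rewrite !opprD !opprK !addrA mulr2n.
congr (_ - w).
by rewrite [_ - v - 1]addrAC [_ - 1 - v + u]addrAC subrK addrK addrNK.
Qed.

Lemma subKx (R : zmodType) (x y : R) : x - (x - y) = y.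
Proof. exact: subKr. Qed.

Lemma L3 (R : pzRingType) (a : R) : 1 - a *+ 2 - a *+ 2 + a *+ 4 = 1.
Proof. by rewrite -[4%N]/(2 + 2)%N mulrnDr addrA subrK subrK. Qed.

Theorem mainTheorem10 (I A : finType) (V : A -> A -> I -> I -> bool)
    (HV : synchronous V)
    (SA : starAlg) (p : I -> A -> SA) (HA : is_universal (sync_rel V) p)
    (SB : starAlg) (z : I -> A -> SB) (HB : is_universal (bcs_rel V) z) :
  exists (phi : SA -> SB) (psi : SB -> SA),
    [/\ is_star_hom phi, is_star_hom psi,
        cancel phi psi /\ cancel psi phi,
        (forall i a, phi (p i a) = sa_scale (2%:R^-1) (1 - z i a)) &
        (forall i a, psi (z i a) = 1 - p i a *+ 2)].
Proof.
case: HA => [[pI pS pSum pO] UA]; case: HB => [[zS zI zO zP zC] UB].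
pose P i a := sa_scale (2%:R^-1) (1 - z i a).
have zE i a : z i a = 1 - P i a *+ 2 by rewrite half2 subKx.
have Porth i j a b : V a b i j = false -> P i a * P j b = 0.
  move=> Vf; have := zO _ _ _ _ Vf.
  move=> /(congr1 (fun x => x *+ 2)); rewrite half2.
  rewrite (zE i a) (zE j b) L1 L2 => /eqP; rewrite subr_eq addrC -subr_eq subrr.
  rewrite eq_sym -[4%N]/(2 * 2)%N mulrnA => /eqP h.
  by apply: (@two_inj SB); apply: (@two_inj SB); rewrite h !mul0rn.
have relB : sync_rel V P.
  split.
  - move=> i a; have := zI i a; rewrite (zE i a) L1.
    move=> /(congr1 (fun x => x - (1 - P i a *+ 2 - P i a *+ 2))).
    rewrite [_ + _ *+ 4]addrC addrK.
    rewrite -[4%N]/(2 * 2)%N mulrnA -addrA -opprD subKx -mulr2n => h.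
    by apply: (@two_inj SB); apply: (@two_inj SB).
  - by move=> i a; rewrite /P sa_starZ conj_half starB star1 zS.
  - move=> i; have := zP i.
    rewrite (eq_bigr (fun a => 1 - P i a *+ 2)) => [|a _]; last exact: zE.
    rewrite prodL ?index_enum_uniq //; last first.
      by move=> a b ab; apply: Porth; apply: HV.
    move=> /(congr1 (fun x => 1 - x)); rewrite subKx => h.
    by apply: (@two_inj SB); rewrite h opprK mulr2n.
  - exact: Porth.
pose K i a := 1 - p i a *+ 2 : SA.
have relA : bcs_rel V K.
  split.
  - by move=> i a; rewrite /K starB star1 starMn pS.
  - by move=> i a; rewrite /K L1 pI L3.
  - move=> i j a b Vf; rewrite /K L1 L2 pO // mul0rn subr0; exact: halfK.
  - move=> i; rewrite /K prodL ?index_enum_uniq //; last first.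
      by move=> a b ab; apply: pO; apply: HV.
    by rewrite pSum mulr2n opprD addrA subrr sub0r.
  - move=> i a a'; rewrite /K !L1.
    have [->|aa'] := eqVneq a a'; first by [].
    rewrite !pO ?HV // 1?eq_sym // !mul0rn !addr0.
    by rewrite addrAC.
have [phi [phiH phiP phiU]] := UA SB P relB.
have [psi [psiH psiP psiU]] := UB SA K relA.
have psiphiH := hom_comp _ _ _ _ _ phiH psiH.
have phipsiH := hom_comp _ _ _ _ _ psiH phiH.
have [_ psiZ _ psi1 _] := psiH.
have [_ phiZ _ phi1 _] := phiH.
have c1 : cancel phi psi.
  move=> x; have [f [fH fP fU]] := UA SA p (And4 pI pS pSum pO).
  have e1 : forall i a, psi (phi (p i a)) = p i a.
    move=> i a; rewrite phiP /P psiZ.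
    by rewrite (homB _ _ _ psiH) psiP psi1 /K subKx halfK.
  by rewrite (fU _ psiphiH e1) -(fU _ (hom_id SA)).
have c2 : cancel psi phi.
  move=> x; have [f [fH fP fU]] := UB SB z (And5 zS zI zO zP zC).
  have e2 : forall i a, phi (psi (z i a)) = z i a.
    move=> i a.
    by rewrite psiP /K (homB _ _ _ phiH) (homMn _ _ _ phiH) phiP phi1 -zE.
  by rewrite (fU _ phipsiH e2) -(fU _ (hom_id SB)).
by exists phi, psi; split.
Qed.
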